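(* Let $Q$ be a finite poset, $X_Q$ its cube complex, and let $P_i=C(I_i,M_i)$ and $P_{i+1}=C(I_{i+1},M_{i+1})$ be consecutive cubes of a valid cube sequence in $X_Q$. Then the interval $X[P_i,P_{i+1}]$ is a truncated CAT(0) orthant space whose origin is the vertex corresponding to the order ideal $I_i$.
   Context: For a finite poset $Q$, $X_Q$ is the cube complex whose vertices are the order ideals of $Q$ and with a cube $C(I,M)$ for each order ideal $I$ and subset $M$ of the set of maximal elements of $I$, whose vertices are $I\setminus S$, $S\subseteq M$. A valid cube sequence is a sequence of cubes $C(I_1,M_1),\dots,C(I_k,M_k)$ of $X_Q$ such that (a) $I_1\subset\cdots\subset I_k=Q$; (b) $I_1=M_1$ and $I_j\setminus I_{j-1}\subseteq M_j$ for $1<j\le k$; (c) each $M_j$ is a maximal antichain of $Q$. For cubes $C,D$, the interval $X[C,D]$ is the subcomplex consisting of all cubes all of whose vertices lie on at least one edge geodesic between a vertex of $C$ and a vertex of $D$. A CAT(0) orthant space $(V,\Omega)$ is given by a set $V$ of coordinates and a flag simplicial complex $\Omega$ on $V$: it is the union of orthants $\mathbb{R}^{|F|}_{\ge 0}$ (non-negative vectors with coordinates indexed by $F$), one for each face $F$ of $\Omega$, identified along subcones of common coordinates, all sharing the origin. A truncated CAT(0) orthant space is obtained by replacing each orthant $\mathbb{R}^{|F|}_{\ge0}$ by the unit cube $[0,1]^{|F|}$; its origin is the common vertex $0$. *)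

(* Defs.v *)
From HB Require Import structures.
From mathcomp Require Import all_boot all_order.
Set Implicit Arguments. Unset Strict Implicit. Unset Printing Implicit Defensive.

Local Open Scope order_scope.

Section XQ.
Context {d : Order.disp_t} {Q : finPOrderType d}.

Definition order_ideal (I : {set Q}) : bool :=
  [forall x, forall y, ((y <= x) && (x \in I)) ==> (y \in I)].

Definition maximal_in (I : {set Q}) (x : Q) : bool :=
  (x \in I) && [forall y, ((y \in I) && (x <= y)) ==> (y == x)].

Definition is_cube (I M : {set Q}) : bool :=
  order_ideal I && [forall x, (x \in M) ==> maximal_in I x].

Definition cube_verts (I M : {set Q}) : {set {set Q}} :=
  [set I :\: S | S in powerset M].

(* cubes of X_Q, each identified with its vertex set *)
Definition XQ_cube (K : {set {set Q}}) : Prop :=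
  exists I M, is_cube I M /\ K = cube_verts I M.

Definition XQ_adj : rel {set Q} := fun x y =>
  [exists I, exists m, is_cube I [set m] &&
     (((x == I) && (y == I :\ m)) || ((y == I) && (x == I :\ m)))].

Definition edge_path (a b : {set Q}) (p : seq {set Q}) : bool :=
  path XQ_adj a p && (last a p == b).

Definition geodesic (a b : {set Q}) (p : seq {set Q}) : Prop :=
  edge_path a b p /\ forall q, edge_path a b q -> (size p <= size q)%N.

Definition on_geodesic (v a b : {set Q}) : Prop :=
  exists p, geodesic a b p /\ v \in a :: p.

Definition interval_cube (C D : {set {set Q}}) (K : {set {set Q}}) : Prop :=
  XQ_cube K /\
  forall v, v \in K -> exists c e, [/\ c \in C, e \in D & on_geodesic v c e].

Definition antichain (A : {set Q}) : bool :=
  [forall x in A, forall y in A, (x <= y) ==> (x == y)].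

Definition maximal_antichain (A : {set Q}) : Prop :=
  antichain A /\ forall B, antichain B -> A \subset B -> B = A.

(* a sequence of cubes C(I_j,M_j), stored as pairs (I_j, M_j), 0-indexed *)
Definition sI (s : seq ({set Q} * {set Q})) (j : nat) : {set Q} :=
  (nth (set0, set0) s j).1.
Definition sM (s : seq ({set Q} * {set Q})) (j : nat) : {set Q} :=
  (nth (set0, set0) s j).2.

Definition valid_cube_seq (s : seq ({set Q} * {set Q})) : Prop :=
  [/\ (0 < size s)%N,
      forall j, (j < size s)%N -> is_cube (sI s j) (sM s j),
      forall j, (j.+1 < size s)%N -> sI s j \proper sI s j.+1,
      sI s (size s).-1 = setT &
    [/\ sI s 0 = sM s 0,
      forall j, (0 < j < size s)%N -> (sI s j :\: sI s j.-1) \subset sM s j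
    & forall j, (j < size s)%N -> maximal_antichain (sM s j)]].

End XQ.

Section Orthant.
Context {V : finType}.

Definition flag_complex (Om : {set {set V}}) : Prop :=
  [/\ set0 \in Om,
      forall F G : {set V}, F \in Om -> G \subset F -> G \in Om,
      forall v, [set v] \in Om
    & forall F : {set V}, (forall u w, u \in F -> w \in F -> [set u; w] \in Om) -> F \in Om].

(* cubes of the truncated orthant space of (V,Om): vertices are the 0/1
   vectors supported on faces (identified with faces); the cubes are the
   faces of the unit cubes [0,1]^F, i.e. sets {H | G <= H <= F}, G <= F faces *)
Definition orth_cube (Om : {set {set V}}) (K : {set {set V}}) : Prop :=
  exists G F, [/\ G \in Om, F \in Om, G \subset F &
                  K = [set H : {set V} | (G \subset H) && (H \subset F)]].
End Orthant.

Definition truncated_orthant_iso {d : Order.disp_t} {Q : finPOrderType d}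
  {V : finType} (Om : {set {set V}}) (f : {set V} -> {set Q})
  (cubes : {set {set Q}} -> Prop) (o : {set Q}) : Prop :=
  [/\ flag_complex Om,
      {in Om &, injective f},
      f set0 = o &
    [/\
      forall v, (exists K, cubes K /\ v \in K) -> exists2 F, F \in Om & f F = v,
      forall K : {set {set V}}, K \subset Om -> (orth_cube Om K <-> cubes (f @: K))
    & forall K', cubes K' -> exists2 K : {set {set V}}, K \subset Om & K' = f @: K]].

Definition is_truncated_orthant_space {d : Order.disp_t} {Q : finPOrderType d}
  (cubes : {set {set Q}} -> Prop) (o : {set Q}) : Prop :=
  exists (V : finType) (Om : {set {set V}}) (f : {set V} -> {set Q}),
    truncated_orthant_iso Om f cubes o.

(* Main.v *)
Require Import Defs.
From HB Require Import structures.
From mathcomp Require Import all_boot all_order.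
From mathcomp Require Import zify.
Set Implicit Arguments. Unset Strict Implicit. Unset Printing Implicit Defensive.
Local Open Scope order_scope.
Import Order.POrderTheory.

Section Geo.
Context {d : Order.disp_t} {Q : finPOrderType d}.
Implicit Types (c e v I : {set Q}).

Definition sd (X Y : {set Q}) := (X :\: Y) :|: (Y :\: X).

Lemma idealP I : order_ideal I <-> forall x y, y <= x -> x \in I -> y \in I.
Proof.
split.
- move=> /forallP H x y le xI. by move: (forallP (H x) y) => /implyP; apply; rewrite le xI.
- move=> H; apply/forallP=> x; apply/forallP => y; apply/implyP => /andP[??]; exact: (H x).
Qed.

Lemma maximalP I m : maximal_in I m <-> m \in I /\ forall z, z \in I -> m <= z -> z = m.
Proof.
rewrite /maximal_in; split.
- move=> /andP[mI /forallP H]; split=> // z zI mz.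
  by move: (H z); rewrite zI mz => /eqP.
- move=> [mI H]; rewrite mI /=; apply/forallP => z; apply/implyP=> /andP[zI mz].
  by rewrite (H z zI mz).
Qed.

Lemma cubeP I M : is_cube I M <-> order_ideal I /\ forall x, x \in M -> maximal_in I x.
Proof.
rewrite /is_cube; split.
- move=> /andP[hI /forallP H]; split=> // x xM; by move: (H x); rewrite xM.
- move=> [hI H]; rewrite hI /=; apply/forallP=> x; apply/implyP; exact: H.
Qed.

Lemma ideal_rm I (S : {set Q}) : order_ideal I -> (forall m, m \in S -> maximal_in I m) ->
  order_ideal (I :\: S).
Proof.
move=> /idealP hI hS; apply/idealP => x y yx; rewrite !inE => /andP[xS xI].
rewrite (hI x y yx xI) andbT; apply/negP => yS.
have [_ H] := (maximalP _ _).1 (hS y yS).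
by move: xS; rewrite (H x xI yx) yS.
Qed.

Lemma exists_max (X : {set Q}) m0 : m0 \in X ->
  exists m, m \in X /\ forall z, z \in X -> m <= z -> z = m.
Proof.
move=> m0X.
suff: forall k m, m \in X -> (#|[set w in X | (m < w)%O]| <= k)%N ->
  exists m, m \in X /\ forall z, z \in X -> m <= z -> z = m.
  by move/(_ _ m0 m0X (leqnn _)).
elim=> [|k IH] m mX.
- rewrite leqn0 cards_eq0 => /eqP H; exists m; split=> // z zX mz.
  apply/eqP; apply/negPn/negP => zm.
  have : z \in [set w in X | m < w] by rewrite inE zX lt_def zm mz.
  by rewrite H inE.
- move=> hk.
  case: (boolP [exists z in X, m < z]) => [/existsP[z /andP[zX mz]]|].
  + apply: (IH z zX).
    have sub : [set w in X | z < w] \proper [set w in X | m < w].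
      apply/properP; split.
        apply/subsetP => w; rewrite !inE => /andP[-> zw] /=; exact: lt_trans mz zw.
      exists z; first by rewrite inE zX mz.
      by rewrite inE ltxx andbF.
    have := proper_card sub; move: hk; clear; lia.
  + move/existsPn => H; exists m; split=> // z zX mz.
    apply/eqP; apply/negPn/negP => zm.
    by move: (H z); rewrite zX lt_def zm mz.
Qed.

Lemma exists_min (X : {set Q}) m0 : m0 \in X ->
  exists m, m \in X /\ forall z, z \in X -> z <= m -> z = m.
Proof.
move=> m0X.
suff: forall k m, m \in X -> (#|[set w in X | (w < m)%O]| <= k)%N ->
  exists m, m \in X /\ forall z, z \in X -> z <= m -> z = m.
  by move/(_ _ m0 m0X (leqnn _)).
elim=> [|k IH] m mX.
- rewrite leqn0 cards_eq0 => /eqP H; exists m; split=> // z zX mz.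
  apply/eqP; apply/negPn/negP => zm.
  have : z \in [set w in X | w < m] by rewrite inE zX lt_def eq_sym zm mz.
  by rewrite H inE.
- move=> hk.
  case: (boolP [exists z in X, z < m]) => [/existsP[z /andP[zX mz]]|].
  + apply: (IH z zX).
    have sub : [set w in X | w < z] \proper [set w in X | w < m].
      apply/properP; split.
        apply/subsetP => w; rewrite !inE => /andP[-> zw] /=; exact: lt_trans zw mz.
      exists z; first by rewrite inE zX mz.
      by rewrite inE ltxx andbF.
    have := proper_card sub; move: hk; clear; lia.
  + move/existsPn => H; exists m; split=> // z zX mz.
    apply/eqP; apply/negPn/negP => zm.
    by move: (H z); rewrite zX lt_def eq_sym zm mz.
Qed.

Lemma sd_tri c x e : sd c e \subset sd c x :|: sd x e.
Proof.
apply/subsetP => z; rewrite !inE.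
by case: (z \in c); case: (z \in x); case: (z \in e).
Qed.

Lemma sdxx x : sd x x = set0.
Proof. by apply/setP => z; rewrite !inE; case: (z \in x). Qed.

Lemma sd0 x y : sd x y = set0 -> x = y.
Proof.
move=> H; apply/setP => z; move/setP: H => /(_ z); rewrite !inE.
by case: (z \in x); case: (z \in y).
Qed.

Lemma adj_spec x y : XQ_adj x y ->
  [/\ order_ideal x, order_ideal y & (#|sd x y| <= 1)%N].
Proof.
move=> /existsP[I /existsP[m /andP[hc H]]].
have [hI hm] := (cubeP _ _).1 hc.
have mm : maximal_in I m by apply: hm; rewrite inE.
have hIm : order_ideal (I :\ m) by apply: ideal_rm => // z; rewrite inE => /eqP->.
have mI : m \in I by case/andP: mm.
have key : forall a b : {set Q}, a = I -> b = I :\ m -> sd a b \subset [set m].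
  move=> a b -> ->; apply/subsetP => z; rewrite !inE.
  by case: (z =P m) => [->|]; rewrite ?mI //= ?andbT; case: (z \in I).
have key2 : forall X : {set Q}, X \subset [set m] -> (#|X| <= 1)%N.
  by move=> X HX; have := subset_leq_card HX; rewrite cards1.
case/orP: H => /andP[/eqP-> /eqP->]; split => //.
  exact/key2/key.
apply/key2; rewrite /sd setUC; exact: key.
Qed.

Lemma path_ideal c p : order_ideal c -> path XQ_adj c p ->
  forall w, w \in c :: p -> order_ideal w.
Proof.
elim: p c => [|a p IH] c hc /=.
  by move=> _ w; rewrite inE => /eqP->.
move=> /andP[ha hp] w; rewrite inE => /orP[/eqP->//|].
have [_ ha' _] := adj_spec ha.
exact: IH.
Qed.

Lemma lower c e p : edge_path c e p -> (#|sd c e| <= size p)%N.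
Proof.
elim: p c => [|a p IH] c; rewrite /edge_path /=.
  by move=> /eqP->; rewrite sdxx cards0.
move=> /andP[/andP[ha hp] he].
have [_ _ h1] := adj_spec ha.
have h2 := IH a (introT andP (conj hp he)).
have := subset_leq_card (sd_tri c a e).
move: (leq_card_setU (sd c a) (sd a e)) => [le _] hs.
apply: (leq_trans hs); apply: (leq_trans le); rewrite -add1n; exact: leq_add h1 h2.
Qed.

Lemma exist_path x y : order_ideal x -> order_ideal y ->
  exists p, edge_path x y p /\ size p = #|sd x y|.
Proof.
move Hn: #|sd x y| => n; elim: n x Hn => [|n IH] x Hn hx hy.
  exists [::]; split => //; rewrite /edge_path /=.
  by move/eqP: Hn; rewrite cards_eq0 => /eqP/sd0->.
have [z zs] : exists z, z \in sd x y.
  apply/set0Pn; apply/negP => /eqP H; by rewrite H cards0 in Hn.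
case: (boolP (x :\: y == set0)) => [/eqP Hxy | /set0Pn [z0 z0X]].
-
  have z0 : z \in y :\: x.
    move: zs; rewrite /sd Hxy set0U.  done.
  have [m [mY mmin]] := exists_min z0.
  have [my mx] : m \in y /\ m \notin x by move: mY; rewrite inE => /andP[].
  have hx' : order_ideal (m |: x).
    apply/idealP => a b ba; rewrite !inE => /orP[/eqP am|ax].
    - case: (boolP (b \in x)) => [_|bx]; first by rewrite orbT.
      have -> : b = m.
        apply: mmin; last by rewrite -am.
        by rewrite inE bx ((idealP _).1 hy a b ba) // am.
      by rewrite eqxx.
    - by rewrite ((idealP _).1 hx a b ba ax) orbT.
  have mmax : maximal_in (m |: x) m.
    apply/maximalP; split; first by rewrite !inE eqxx.
    move=> w; rewrite !inE => /orP[/eqP //|wx] mw.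
    by move: mx; rewrite ((idealP _).1 hx w m mw wx).
  have adj : XQ_adj x (m |: x).
    apply/existsP; exists (m |: x); apply/existsP; exists m.
    apply/andP; split.
      apply/cubeP; split => // w; rewrite inE => /eqP->//.
    apply/orP; right; rewrite eqxx /=.
    apply/eqP/setP => w; rewrite !inE; case: (w =P m) => [->|]//=.
    by rewrite (negbTE mx).
  have Hn' : #|sd (m |: x) y| = n.
    have -> : sd (m |: x) y = sd x y :\ m.
      apply/setP => w; rewrite !inE; case: (w =P m) => [->|] /=.
        by rewrite my.
      done.
    move: Hn; rewrite (cardsD1 m) !inE my mx /=; clear; lia.
  have [p [hp sp]] := IH _ Hn' hx' hy.
  exists (m |: x :: p); split; last by rewrite /= sp.
  move: hp; rewrite /edge_path /= adj //.
-
  have [m [mX mmax]] := exists_max z0X.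
  have [mx my] : m \in x /\ m \notin y by move: mX; rewrite inE => /andP[].
  have mmx : maximal_in x m.
    apply/maximalP; split => // w wx mw.
    apply: mmax => //; rewrite inE wx andbT; apply/negP => wy.
    by move: my; rewrite ((idealP _).1 hy w m mw wy).
  have hx' : order_ideal (x :\ m) by apply: ideal_rm => // w; rewrite inE => /eqP->.
  have adj : XQ_adj x (x :\ m).
    apply/existsP; exists x; apply/existsP; exists m.
    apply/andP; split.
      apply/cubeP; split => // w; rewrite inE => /eqP->//.
    by rewrite !eqxx.
  have Hn' : #|sd (x :\ m) y| = n.
    have -> : sd (x :\ m) y = sd x y :\ m.
      apply/setP => w; rewrite !inE; case: (w =P m) => [->|] /=.
        by rewrite (negbTE my) andbF.
      done.
    move: Hn; rewrite (cardsD1 m) !inE my mx /=; clear; lia.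
  have [p [hp sp]] := IH _ Hn' hx' hy.
  exists (x :\ m :: p); split; last by rewrite /= sp.
  move: hp; rewrite /edge_path /= adj //.
Qed.

Lemma no_common c v e z : z \in sd c v -> z \in sd v e -> z \notin sd c e ->
  (#|sd c e| < #|sd c v| + #|sd v e|)%N.
Proof.
move=> z1 z2 z3.
have sub : sd c e \subset (sd c v :|: sd v e) :\ z.
  apply/subsetP => w wi; rewrite !inE; apply/andP; split.
    by apply/negP => /eqP wz; move: z3; rewrite -wz wi.
  by move: wi; rewrite !inE; case: (w \in c); case: (w \in v); case: (w \in e).
have h1 := subset_leq_card sub.
have h2 : #|sd c v :|: sd v e| = (#|(sd c v :|: sd v e) :\ z|).+1.
  by rewrite (cardsD1 z) inE z1.
move: (leq_card_setU (sd c v) (sd v e)) => [le _].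
rewrite h2 in le.
exact: leq_ltn_trans h1 le.
Qed.

Lemma between_card c v e : (#|sd c v| + #|sd v e| <= #|sd c e|)%N ->
  c :&: e \subset v /\ v \subset c :|: e.
Proof.
move=> H; split; apply/subsetP => z zi; apply/negPn/negP => zv.
- have := @no_common c v e z.
  move: zi zv; rewrite !inE => /andP[zc ze] zv.
  rewrite zc ze (negbTE zv) /= => /(_ isT isT isT).
  by rewrite ltnNge H.
- have := @no_common c v e z.
  move: zi zv; rewrite !inE negb_or => zv /andP[zc ze].
  rewrite (negbTE zc) (negbTE ze) zv /= => /(_ isT isT isT).
  by rewrite ltnNge H.
Qed.

Lemma between_eq c v e : c :&: e \subset v -> v \subset c :|: e ->
  #|sd c v| + #|sd v e| = #|sd c e|.
Proof.
move=> /subsetP h1 /subsetP h2.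
have -> : sd c e = sd c v :|: sd v e.
  apply/setP => z; move/implyP: (h1 z); move/implyP: (h2 z); rewrite !inE.
  by case: (z \in c); case: (z \in v); case: (z \in e).
rewrite cardsU.
have -> : sd c v :&: sd v e = set0.
  apply/setP => z; move/implyP: (h1 z); move/implyP: (h2 z); rewrite !inE.
  by case: (z \in c); case: (z \in v); case: (z \in e).
by rewrite cards0 subn0.
Qed.

Lemma geo_char c e v : order_ideal c -> order_ideal e ->
  (on_geodesic v c e <-> [/\ order_ideal v, c :&: e \subset v & v \subset c :|: e]).
Proof.
move=> hc he; split.
- move=> [p [[hp hmin] vp]].
  have hv : order_ideal v.
    case/andP: hp => hp _; exact: path_ideal hc hp v vp.
  have [q [hq sq]] := exist_path hc he.
  have sp : (size p <= #|sd c e|)%N by rewrite -sq; apply: hmin.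
  move: vp; rewrite inE => /orP[/eqP->|vp].
    split=> //; [exact: subsetIl | exact: subsetUl].
  case/path.splitP: vp hp sp => p1 p2.
  rewrite /edge_path cat_path last_cat last_rcons => /andP[/andP[h1 h2] h3] sp.
  have l1 : (#|sd c v| <= size (rcons p1 v))%N.
    by apply: lower; rewrite /edge_path h1 last_rcons eqxx.
  have l2 : (#|sd v e| <= size p2)%N.
    by apply: lower; rewrite /edge_path h2 h3.
  have [b1 b2] : c :&: e \subset v /\ v \subset c :|: e.
    apply: between_card; apply: leq_trans sp.
    rewrite size_cat; exact: leq_add.
  by split.
- move=> [hv b1 b2].
  have [p1 [hp1 s1]] := exist_path hc hv.
  have [p2 [hp2 s2]] := exist_path hv he.
  exists (p1 ++ p2); split; last first.
    have := mem_last c p1; case/andP: hp1 => _ /eqP->.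
    rewrite !inE mem_cat => /orP[->//|->]; by rewrite orbT.
  split.
    case/andP: hp1 => a1 /eqP l1; case/andP: hp2 => a2 l2.
    by rewrite /edge_path cat_path a1 last_cat l1 a2 l2.
  move=> q hq; rewrite size_cat s1 s2 between_eq //; exact: lower.
Qed.
End Geo.

Section Main.
Context {d : Order.disp_t} {Q : finPOrderType d}.
Variables (A B M N : {set Q}).
Implicit Types (h v I : {set Q}).
Hypotheses (hA : order_ideal A) (hB : order_ideal B) (AB : A \subset B)
  (hM : forall x, x \in M -> maximal_in A x)
  (hN : forall x, x \in N -> maximal_in B x)
  (hBA : B :\: A \subset N).

Definition Dset := (B :\: A) :|: (A :&: (M :|: N)).
Definition V : finType := {x : Q | x \in Dset}.
Definition bad (r p : Q) := [&& r \in A, p \notin A & r <= p].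
Definition good (h : {set Q}) := [forall r in h, forall p in h, ~~ bad r p].
Definition inW (v : {set Q}) := [&& order_ideal v, v \subset B & A :\: v \subset M :|: N].

Lemma goodP h : reflect (forall r p, r \in h -> p \in h -> ~~ bad r p) (good h).
Proof.
apply: (iffP forallP) => H.
- move=> r p rh ph; move: (H r); rewrite rh /= => /forallP /(_ p); by rewrite ph.
- move=> r; apply/implyP => rh; apply/forallP => p; apply/implyP => ph; exact: H.
Qed.

Lemma good_sub h h' : h' \subset h -> good h -> good h'.
Proof.
move=> /subsetP s /goodP g; apply/goodP => r p rh ph; apply: g; exact: s.
Qed.

Lemma maxA y : y \in A -> y \in M :|: N -> maximal_in A y.
Proof.
move=> yA; rewrite inE => /orP[yM|yN]; first exact: hM.
have [yB H] := (maximalP _ _).1 (hN yN).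
apply/maximalP; split => // z zA yz; apply: H => //; exact: (subsetP AB).
Qed.

Lemma maxB y : y \in B -> y \notin A -> maximal_in B y.
Proof. move=> yB yA; apply: hN; apply: (subsetP hBA); by rewrite inE yA yB. Qed.

Lemma DsetP y : y \in Dset -> y \in B /\ (y \in A -> y \in M :|: N).
Proof.
rewrite !inE => /orP[/andP[yA yB]|/andP[yA yMN]]; split => //.
- by rewrite (negbTE yA).
- exact: (subsetP AB).
Qed.

Lemma sdK h : sd A (sd A h) = h.
Proof.
by apply/setP => z; rewrite !inE; case: (z \in A); case: (z \in h).
Qed.

Lemma idealQ h : h \subset Dset -> order_ideal (sd A h) = good h.
Proof.
move=> /subsetP hD; apply/idP/idP.
- move=> /idealP hi; apply/goodP => r p rh ph; apply/negP => /and3P[rA pA rp].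
  have : p \in sd A h by rewrite !inE pA ph.
  move/(hi p r rp); by rewrite !inE rA rh.
- move=> /goodP g; apply/idealP => x y yx.
  rewrite !inE => /orP[/andP[xh xA]|/andP[xA xh]].
  + have yA := (idealP _).1 hA x y yx xA.
    case: (boolP (y \in h)) => yh; last by rewrite yA.
    have [_ H] := (maximalP _ _).1 (maxA yA ((DsetP (hD y yh)).2 yA)).
    by move: xh; rewrite (H x xA yx) yh.
  + have [xB _] := DsetP (hD x xh).
    have [_ Hx] := (maximalP _ _).1 (maxB xB xA).
    have yB := (idealP _).1 hB x y yx xB.
    case: (boolP (y \in A)) => yA; last first.
      have [_ Hy] := (maximalP _ _).1 (maxB yB yA).
      by rewrite -(Hy x xB yx) xh.
    case: (boolP (y \in h)) => yh; last by [].
    by move: (g y x yh xh); rewrite /bad yA xA yx.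
Qed.

Lemma inW_good h : h \subset Dset -> inW (sd A h) = good h.
Proof.
move=> hD; rewrite /inW idealQ //.
have -> : sd A h \subset B.
  apply/subsetP => z; rewrite !inE => /orP[/andP[_ zA]|/andP[_ zh]].
    exact: (subsetP AB).
  exact: (DsetP (subsetP hD z zh)).1.
have -> // : A :\: sd A h \subset M :|: N.
  apply/subsetP => z; rewrite !inE => /andP[H zA].
  case: (boolP (z \in h)) => zh; last by move: H; rewrite zh zA.
  have := (DsetP (subsetP hD z zh)).2 zA; by rewrite inE.
by rewrite !andbT.
Qed.

Lemma inW_sd v : inW v -> sd A v \subset Dset.
Proof.
move=> /and3P[_ /subsetP vB /subsetP vMN]; apply/subsetP => z.
rewrite !inE => /orP[/andP[zv zA]|/andP[zA zv]].
  have := vMN z; rewrite !inE zA zv => /(_ isT) ->; by rewrite orbT.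
by rewrite zA (vB z zv).
Qed.

Lemma cvP I (S0 : {set Q}) v : reflect (exists S : {set Q}, S \subset S0 /\ v = I :\: S) (v \in cube_verts I S0).
Proof.
apply: (iffP imsetP) => [[S]|[S [SS ->]]].
  by rewrite powersetE => SS ->; exists S.
by exists S; rewrite ?powersetE.
Qed.

Lemma W_spec v :
  (exists c e, [/\ c \in cube_verts A M, e \in cube_verts B N & on_geodesic v c e])
  <-> inW v.
Proof.
split.
- move=> [c [e [/cvP[S [SM ->]] /cvP[T [TN ->]] hg]]].
  have hc : order_ideal (A :\: S).
    apply: ideal_rm => // m mS; apply: hM; exact: (subsetP SM).
  have he : order_ideal (B :\: T).
    apply: ideal_rm => // m mT; apply: hN; exact: (subsetP TN).
  have [hv /subsetP b1 /subsetP b2] := (geo_char v hc he).1 hg.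
  rewrite /inW hv /=; apply/andP; split; apply/subsetP => z.
  + move=> zv; move: (b2 z zv); rewrite !inE => /orP[/andP[_ zA]|/andP[_ //]].
    exact: (subsetP AB).
  + rewrite inE => /andP[zv zA].
    have zB := subsetP AB z zA.
    have := b1 z; rewrite (negbTE zv) !inE zA zB !andbT => H.
    case: (boolP (z \in S)) => zS; first by rewrite (subsetP SM z zS).
    case: (boolP (z \in T)) => zT; first by rewrite (subsetP TN z zT) orbT.
    by move: H; rewrite zS zT => /(_ isT).
- move=> hW; have /and3P[hv /subsetP vB /subsetP vMN] := hW.
  exists (A :\: (M :\: v)), (B :\: (N :\: v)); split.
  + apply/cvP; exists (M :\: v); split => //; exact: subsetDl.
  + apply/cvP; exists (N :\: v); split => //; exact: subsetDl.
  + have hc : order_ideal (A :\: (M :\: v)).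
      apply: ideal_rm => // m; rewrite inE => /andP[_ mM]; exact: hM.
    have he : order_ideal (B :\: (N :\: v)).
      apply: ideal_rm => // m; rewrite inE => /andP[_ mN]; exact: hN.
    apply/(geo_char v hc he); split => //; apply/subsetP => z.
    * rewrite !inE => /andP[/andP[zNv zB] /andP[zMv zA]].
      apply/negPn/negP => zv.
      have := vMN z; rewrite !inE zv zB => /(_ isT) /orP[zM|zN].
        by move: zNv; rewrite zv zM.
      by move: zMv; rewrite zv zN.
    * move=> zv; by rewrite !inE zv (vB z zv) /= orbT.
Qed.

Lemma sdsd (X : {set {set Q}}) : (sd A) @: ((sd A) @: X) = X.
Proof.
rewrite -imset_comp; rewrite (eq_imset _ (g := id)); first exact: imset_id.
by move=> h /=; rewrite sdK.
Qed.

Lemma L I (M' : {set Q}) : M' \subset I ->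
  (sd A) @: cube_verts I M' =
  [set h : {set Q} | (sd A I :\: M' \subset h) && (h \subset sd A I :|: M')].
Proof.
move=> /subsetP MI; apply/setP => h; rewrite inE; apply/imsetP/andP.
- move=> [v /cvP[S [/subsetP SM ->]] ->]; split; apply/subsetP => z.
  + move/implyP: (SM z); rewrite !inE.
    by case: (z \in A); case: (z \in I); case: (z \in S); case: (z \in M').
  + move/implyP: (SM z); rewrite !inE.
    by case: (z \in A); case: (z \in I); case: (z \in S); case: (z \in M').
- move=> [/subsetP h1 /subsetP h2]; exists (sd A h); last by rewrite sdK.
  apply/cvP; exists (I :\: sd A h); split.
    apply/subsetP => z; move/implyP: (h1 z); move/implyP: (h2 z); move/implyP: (MI z); rewrite !inE.
    by case: (z \in A); case: (z \in I); case: (z \in h); case: (z \in M').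
  apply/setP => z; move/implyP: (h1 z); move/implyP: (h2 z); move/implyP: (MI z); rewrite !inE.
  by case: (z \in A); case: (z \in I); case: (z \in h); case: (z \in M').
Qed.

Definition vimg (H : {set V}) : {set Q} := [set val x | x in H].
Definition f (H : {set V}) := sd A (vimg H).
Definition Om := [set H : {set V} | good (vimg H)].

Lemma vimg_sub H : vimg H \subset Dset.
Proof. apply/subsetP => z /imsetP[x _ ->]; exact: valP. Qed.

Lemma vimg_mem H (x : V) : (val x \in vimg H) = (x \in H).
Proof. apply: mem_imset; exact: val_inj. Qed.

Lemma lift h : h \subset Dset -> vimg [set x : V | val x \in h] = h.
Proof.
move=> /subsetP hD; apply/setP => z; apply/imsetP/idP.
- by move=> [x]; rewrite inE => xh ->.
- move=> zh; exists (exist _ z (hD z zh) : V) => //; by rewrite inE.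
Qed.

Lemma vimg_inj : injective vimg.
Proof. apply: imset_inj; exact: val_inj. Qed.

Lemma vimg_subset G H : (vimg G \subset vimg H) = (G \subset H).
Proof.
apply/idP/idP; last exact: imsetS.
move=> /subsetP s; apply/subsetP => x xG; rewrite -vimg_mem; apply: s.
by rewrite vimg_mem.
Qed.

Lemma inW_f H : H \in Om -> inW (f H).
Proof. rewrite inE => g; rewrite /f inW_good //; exact: vimg_sub. Qed.

Lemma f_surj v : inW v -> exists2 H, H \in Om & f H = v.
Proof.
move=> hW; have hD := inW_sd hW.
exists [set x : V | val x \in sd A v].
  by rewrite inE lift // -inW_good // sdK.
by rewrite /f lift // sdK.
Qed.

Lemma interval_char K :
  interval_cube (cube_verts A M) (cube_verts B N) K <->
  XQ_cube K /\ forall v, v \in K -> inW v.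
Proof.
split; move=> [hK H]; split => // v vK.
- by apply/W_spec; have [c [e [? ? ?]]] := H v vK; exists c, e.
- by have [c [e [? ? ?]]] := (W_spec v).2 (H v vK); exists c, e.
Qed.

Lemma fK (K : {set {set V}}) : f @: K = (sd A) @: (vimg @: K).
Proof. by rewrite -imset_comp. Qed.

Lemma iso_main :
  truncated_orthant_iso Om f (interval_cube (cube_verts A M) (cube_verts B N)) A.
Proof.
split.
- split.
  + rewrite inE /vimg imset0; apply/goodP => r p; by rewrite inE.
  + move=> F G; rewrite !inE => g s; apply: good_sub g; exact: imsetS.
  + move=> v; rewrite inE /vimg imset_set1; apply/goodP => r p.
    rewrite !inE => /eqP-> /eqP->; rewrite /bad; by case: (val v \in A).
  + move=> F Hp; rewrite inE; apply/goodP => r p /imsetP[u uF ->] /imsetP[w wF ->].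
    have := Hp u w uF wF; rewrite inE => /goodP; apply; rewrite vimg_mem !inE eqxx ?orbT //.
- move=> H1 H2 _ _ /(congr1 (sd A)); rewrite /f !sdK; exact: vimg_inj.
- rewrite /f /vimg imset0; apply/setP => z; rewrite !inE; by case: (z \in A).
split.
- move=> v [K [/interval_char [_ H] vK]]; exact: f_surj (H v vK).
- move=> K /subsetP KOm; split.
  + move=> [G [F [GOm FOm GF KE]]]; rewrite KE.
    set g := vimg G; set F' := vimg F.
    have gF : g \subset F' by rewrite vimg_subset.
    have FD : F' \subset Dset by exact: vimg_sub.
    have gFF : good F' by move: FOm; rewrite inE.
    have KqE : vimg @: [set H : {set V} | (G \subset H) && (H \subset F)] =
               [set h : {set Q} | (g \subset h) && (h \subset F')].
      apply/setP => h; rewrite inE; apply/imsetP/andP.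
      * by move=> [H]; rewrite inE -!vimg_subset => /andP[h1 h2] ->.
      * move=> [h1 h2]; have hD : h \subset Dset := subset_trans h2 FD.
        exists [set x : V | val x \in h]; last by rewrite lift.
        by rewrite inE -!vimg_subset lift // h1 h2.
    set H0 := g :|: ((F' :\: g) :\: A).
    set I := sd A H0; set M' := F' :\: g.
    have MI : M' \subset I.
      apply/subsetP => z; rewrite !inE.
      by case: (z \in A); case: (z \in g); case: (z \in F').
    have H0F : H0 \subset F'.
      apply/subsetP => z; move/subsetP: gF => /(_ z) /implyP; rewrite !inE.
      by case: (z \in A); case: (z \in g); case: (z \in F').
    have key : [set h : {set Q} | (sd A I :\: M' \subset h) && (h \subset sd A I :|: M')]
             = [set h : {set Q} | (g \subset h) && (h \subset F')].
      rewrite /I sdK.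
      have -> : H0 :\: M' = g.
        apply/setP => z; move/subsetP: gF => /(_ z) /implyP; rewrite !inE.
        by case: (z \in A); case: (z \in g); case: (z \in F').
      have -> // : H0 :|: M' = F'.
        apply/setP => z; move/subsetP: gF => /(_ z) /implyP; rewrite !inE.
        by case: (z \in A); case: (z \in g); case: (z \in F').
    have Hc : f @: [set H : {set V} | (G \subset H) && (H \subset F)] = cube_verts I M'.
      by rewrite fK KqE -key -L // sdsd.
    apply/interval_char; split.
    * exists I, M'; split => //; apply/cubeP; split.
        rewrite /I idealQ; last exact: subset_trans H0F FD.
        exact: good_sub H0F gFF.
      move=> m mM; apply/maximalP; split; first exact: (subsetP MI).
      move=> z zI mz.
      have mF : m \in F' by move: mM; rewrite inE => /andP[].
      have [mB mMN] := DsetP (subsetP FD m mF).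
      case: (boolP (m \in A)) => mA; last first.
        have [_ Hm] := (maximalP _ _).1 (maxB mB mA); apply: Hm mz.
        move: zI; rewrite !inE => /orP[/andP[_ zA]|/andP[_ zH0]].
          exact: (subsetP AB).
        have zH : z \in H0 by rewrite /H0 !inE.
        exact: (DsetP (subsetP FD z (subsetP H0F z zH))).1.
      have [_ Hm] := (maximalP _ _).1 (maxA mA (mMN mA)).
      case: (boolP (z \in A)) => zA; first exact: Hm.
      have zF : z \in F'.
        move: zI; rewrite !inE (negbTE zA) andbF /= => zH0.
        apply: (subsetP H0F); by rewrite /H0 !inE (negbTE zA).
      by move/goodP: gFF => /(_ m z mF zF); rewrite /bad mA zA mz.
    * move=> v /imsetP[H HK ->]; apply: inW_f; apply: KOm.
      by rewrite KE.
  + move=> /interval_char [[I [M' [hc Hc]]] _].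
    have MI : M' \subset I.
      apply/subsetP => m mM; have [_ hm] := (cubeP _ _).1 hc.
      by case/andP: (hm m mM).
    set g := sd A I :\: M'; set F' := sd A I :|: M'.
    have KqE : vimg @: K = [set h : {set Q} | (g \subset h) && (h \subset F')].
      by rewrite -L // -Hc fK sdsd.
    have gF : g \subset F' by apply: subset_trans (subsetDl _ _) (subsetUl _ _).
    have : g \in vimg @: K by rewrite KqE inE subxx gF.
    move=> /imsetP[G GK gE].
    have : F' \in vimg @: K by rewrite KqE inE subxx gF.
    move=> /imsetP[F FK FE].
    exists G, F; split; [exact: KOm|exact: KOm| |].
      by rewrite -vimg_subset -gE -FE.
    apply/setP => H; rewrite inE -!vimg_subset -gE -FE.
    have := mem_imset (mem K) H vimg_inj.
    by rewrite KqE inE => <-.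
- move=> K' /interval_char [hK' HW].
  exists [set H : {set V} | (H \in Om) && (f H \in K')].
    by apply/subsetP => H; rewrite inE => /andP[].
  apply/setP => v; apply/idP/imsetP.
  + move=> vK; have [H HOm fH] := f_surj (HW v vK).
    by exists H; rewrite // inE HOm fH vK.
  + by move=> [H]; rewrite inE => /andP[_ ?] ->.
Qed.
End Main.

Theorem corollary5p5 (d : Order.disp_t) (Q : finPOrderType d)
  (s : seq ({set Q} * {set Q})) (i : nat) :
  valid_cube_seq s -> (i.+1 < size s)%N ->
  is_truncated_orthant_space
    (interval_cube (cube_verts (sI s i) (sM s i))
                   (cube_verts (sI s i.+1) (sM s i.+1)))
    (sI s i).
Proof.
move=> [s0 hcube hprop hlast [h0 hsub hmax]] hi.
have [hA hM] := (cubeP _ _).1 (hcube i (ltnW hi)).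
have [hB hN] := (cubeP _ _).1 (hcube i.+1 hi).
have AB := proper_sub (hprop i hi).
have hBA := hsub i.+1 hi.
eexists _, _, _; apply: iso_main; eassumption.
Qed.
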